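(* Let $(\mathcal S,\mathcal A,H,\mathbb P,\mu)$ be a finite episodic MDP, $\pi^+$ a deterministic target policy and $\epsilon>0$. Define manipulated mean rewards $\tilde\mu_h(s,a)=\mu(s,a)$ if $a=\pi^+_h(s)$, and $\tilde\mu_h(s,a)=Q^{\pi^+}_h(s,\pi^+_h(s))-\mathbb E_{s'\sim\mathbb P(\cdot\mid s,a)}[V^{\pi^+}_{h+1}(s')]-\epsilon$ otherwise, and let $\tilde Q^\pi_h,\tilde V^\pi_h$ be Q-values and values of deterministic policies in the MDP with transitions $\mathbb P$ and step-$h$ mean rewards $\tilde\mu_h$ (with $\tilde V_{H+1}\equiv 0$). Then for every $h\le H$, $s\in\mathcal S$, $a\ne\pi^+_h(s)$ and every deterministic policy $\pi$, $$\tilde Q^{\pi}_h(s,a)\le\tilde Q^{\pi^+}_h(s,\pi^+_h(s))-\epsilon,$$ and $\tilde V^\pi_h(s)\le\tilde V^{\pi^+}_h(s)$ for all $h,s,\pi$, with strict inequality whenever $\pi_h(s)\ne\pi^+_h(s)$.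
   Context: $V^\pi_h(s)=\mathbb E[\sum_{h'=h}^H\mu(s_{h'},\pi_{h'}(s_{h'}))\mid s_h=s]$ and $Q^\pi_h(s,a)=\mu(s,a)+\mathbb E_{s'\sim\mathbb P(\cdot|s,a)}[V^\pi_{h+1}(s')]$ are the true values, with $V^\pi_{H+1}\equiv0$; $\tilde Q^\pi_h(s,a)=\tilde\mu_h(s,a)+\mathbb E_{s'\sim\mathbb P(\cdot|s,a)}[\tilde V^\pi_{h+1}(s')]$, $\tilde V^\pi_h(s)=\tilde Q^\pi_h(s,\pi_h(s))$. *)

(* Defs.v *)
From HB Require Import structures.
From mathcomp Require Import all_boot all_order all_algebra.
Set Implicit Arguments. Unset Strict Implicit. Unset Printing Implicit Defensive.
Import Order.TTheory GRing.Theory Num.Theory.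
Local Open Scope ring_scope.

Section MDP.
Variables (R : realFieldType) (S A : finType).

(* transition kernel P s a s' = P(s' | s, a) *)
Definition is_kernel (P : S -> A -> S -> R) : Prop :=
  forall s a, (forall s', 0 <= P s a s') /\ \sum_(s' : S) P s a s' = 1.

(* deterministic (non-stationary) policy: pi h s is the action at step h *)
Definition policy := nat -> S -> A.

(* value with n remaining steps, starting at step h, step-dependent reward rew h s a *)
Fixpoint Vn (P : S -> A -> S -> R) (rew : nat -> S -> A -> R) (pi : policy)
  (n h : nat) (s : S) : R :=
  match n with
  | 0 => 0
  | n'.+1 => rew h s (pi h s) + \sum_(s' : S) P s (pi h s) s' * Vn P rew pi n' h.+1 s'
  end.

(* V^pi_h(s) for horizon H: H+1-h steps remain; V_{H+1} = 0 *)
Definition Vval (H : nat) P rew pi (h : nat) (s : S) : R := Vn P rew pi (H.+1 - h) h s.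

Definition Qval (H : nat) P rew pi (h : nat) (s : S) (a : A) : R :=
  rew h s a + \sum_(s' : S) P s a s' * Vval H P rew pi h.+1 s'.

Definition stat_rew (mu : S -> A -> R) : nat -> S -> A -> R := fun _ s a => mu s a.

Definition manip_rew (H : nat) P (mu : S -> A -> R) (pip : policy) (eps : R)
  : nat -> S -> A -> R :=
  fun h s a =>
    if a == pip h s then mu s a
    else Qval H P (stat_rew mu) pip h s (pip h s)
         - \sum_(s' : S) P s a s' * Vval H P (stat_rew mu) pip h.+1 s' - eps.

End MDP.

(* Main.v *)
Require Import Defs.
From HB Require Import structures.
From mathcomp Require Import all_boot all_order all_algebra.
From mathcomp Require Import lra.
Import Order.TTheory GRing.Theory Num.Theory.
Local Open Scope ring_scope.

Lemma Vpip_eq (R : realFieldType) (S A : finType) (H : nat)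
  (P : S -> A -> S -> R) (mu : S -> A -> R) (pip : policy S A) (eps : R) n :
  forall h s, Vn P (manip_rew H P mu pip eps) pip n h s = Vn P (stat_rew mu) pip n h s.
Proof.
elim: n => [|n IH] h s //=.
rewrite /manip_rew eqxx; congr (_ + _).
by apply: eq_bigr => s' _; rewrite IH.
Qed.

Lemma sum_le (R : realFieldType) (S : finType) (p f g : S -> R) :
  (forall s, 0 <= p s) -> (forall s, f s <= g s) ->
  \sum_s p s * f s <= \sum_s p s * g s.
Proof.
move=> hp hfg; apply: ler_sum => s _; exact: ler_wpM2l.
Qed.

Lemma Vmain (R : realFieldType) (S A : finType) (H : nat)
  (P : S -> A -> S -> R) (mu : S -> A -> R) (pip : policy S A) (eps : R) :
  is_kernel P -> 0 < eps -> forall n h, n = (H.+1 - h)%N -> forall pi s,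
  Vn P (manip_rew H P mu pip eps) pi n h s <= Vn P (manip_rew H P mu pip eps) pip n h s /\
  ((0 < n)%N -> pi h s != pip h s ->
   Vn P (manip_rew H P mu pip eps) pi n h s < Vn P (manip_rew H P mu pip eps) pip n h s).
Proof.
move=> hK he; elim=> [|n IH] h hn pi s; first by split.
have hn' : n = (H.+1 - h.+1)%N by rewrite subnS -hn.
have hP : forall a s', 0 <= P s a s' by move=> a s'; case: (hK s a) => ? _.
have hle : forall a, \sum_s' P s a s' * Vn P (manip_rew H P mu pip eps) pi n h.+1 s'
                 <= \sum_s' P s a s' * Vn P (manip_rew H P mu pip eps) pip n h.+1 s'.
  by move=> a; apply: sum_le => // s'; case: (IH _ hn' pi s').
rewrite /=.
case: (eqVneq (pi h s) (pip h s)) => [E|NE].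
  rewrite E; split => //; by rewrite lerD2l.
have key : manip_rew H P mu pip eps h s (pi h s) +
  \sum_s' P s (pi h s) s' * Vn P (manip_rew H P mu pip eps) pi n h.+1 s' <=
  manip_rew H P mu pip eps h s (pip h s) +
  \sum_s' P s (pip h s) s' * Vn P (manip_rew H P mu pip eps) pip n h.+1 s' - eps.
  rewrite {1}/manip_rew (negbTE NE) {2}/manip_rew eqxx /Qval /Vval -hn'.
  have := hle (pi h s).
  have E : forall a, \sum_s' P s a s' * Vn P (manip_rew H P mu pip eps) pip n h.+1 s'
     = \sum_s' P s a s' * Vn P (stat_rew mu) pip n h.+1 s'.
    by move=> a; apply: eq_bigr => s' _; rewrite Vpip_eq.
  rewrite !E /stat_rew.
  move=> h1; lra.
have : forall x : R, x - eps < x by move=> x; lra.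
move=> /(_ (manip_rew H P mu pip eps h s (pip h s) +
  \sum_s' P s (pip h s) s' * Vn P (manip_rew H P mu pip eps) pip n h.+1 s')) h2.
split; last by move=> _ _; apply: le_lt_trans key h2.
exact: ltW (le_lt_trans key h2).
Qed.

Theorem mainTheorem6 (R : realFieldType) (S A : finType) (H : nat)
  (P : S -> A -> S -> R) (mu : S -> A -> R) (pip : policy S A) (eps : R) :
  is_kernel P -> 0 < eps ->
  let mut := manip_rew H P mu pip eps in
  (forall (pi : policy S A) (h : nat) (s : S) (a : A),
      (1 <= h <= H)%N -> a != pip h s ->
      Qval H P mut pi h s a <= Qval H P mut pip h s (pip h s) - eps)
  /\
  (forall (pi : policy S A) (h : nat) (s : S),
      (1 <= h <= H)%N ->
      Vval H P mut pi h s <= Vval H P mut pip h s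
      /\ (pi h s != pip h s -> Vval H P mut pi h s < Vval H P mut pip h s)).
Proof.
move=> hK he mut; split.
  move=> pi h s a hh NE.
  have hP : forall s', 0 <= P s a s' by move=> s'; case: (hK s a) => ? _.
  have hle : \sum_s' P s a s' * Vval H P mut pi h.+1 s'
           <= \sum_s' P s a s' * Vval H P mut pip h.+1 s'.
    by apply: sum_le => // s'; case: (@Vmain R S A H P mu pip eps hK he (H.+1 - h.+1)%N h.+1 (erefl _) pi s').
  rewrite /Qval {1}/mut {1}/manip_rew (negbTE NE) /mut /manip_rew eqxx /Qval /Vval.
  move: hle; rewrite /Vval /mut.
  have E : forall a, \sum_s' P s a s' * Vn P (manip_rew H P mu pip eps) pip (H.+1 - h.+1) h.+1 s'
     = \sum_s' P s a s' * Vn P (stat_rew mu) pip (H.+1 - h.+1) h.+1 s'.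
    by move=> b; apply: eq_bigr => s' _; rewrite Vpip_eq.
  rewrite !E /stat_rew.
  move=> h1; lra.
move=> pi h s /andP [h1 h2].
have := @Vmain R S A H P mu pip eps hK he _ _ (erefl (H.+1 - h)%N) pi s.
case=> a b; split => // NE; apply: b => //.
by rewrite subn_gt0 ltnS.
Qed.
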